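(* Let $0<\varepsilon < 1/25$ and let $\mathbb{F}$ be a field with $|\mathbb{F}| \ge n^2$. For every sufficiently large $n$, there exists a non-zero polynomial $Q \in \mathbb{F}[x_{1,1}, \ldots, x_{n,n}]$ of degree at most $n^3$ such that $Q(M)=0$ for every matrix $M \in \mathbb{F}^{n\times n}$ which is not $(\varepsilon n, \varepsilon n^2)$-rigid.
   Context: A matrix $M\in\mathbb{F}^{n\times n}$ is $(r,s)$-rigid if $M$ cannot be written as $M=R+S$ with $\mathrm{rank}(R)\le r$ and $S$ having at most $s$ non-zero entries. For a polynomial $Q$ in the $n^2$ variables $x_{i,j}$, $Q(M)$ denotes the evaluation at $x_{i,j}=M_{i,j}$. *)

(* Defs.v *)
From HB Require Import structures.
From mathcomp Require Import all_boot all_order all_algebra.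
From mathcomp Require Import mpoly.
Set Implicit Arguments. Unset Strict Implicit. Unset Printing Implicit Defensive.
Import Order.TTheory GRing.Theory Num.Theory.
Local Open Scope ring_scope.

Definition nnz (F : fieldType) (n : nat) (S : 'M[F]_n) : nat :=
  #|[set ij : 'I_n * 'I_n | S ij.1 ij.2 != 0]|.

Definition rigid (R : realFieldType) (F : fieldType) (n : nat) (r s : R)
    (M : 'M[F]_n) : Prop :=
  ~ exists (A S : 'M[F]_n),
      [/\ M = A + S, (\rank A)%:R <= r & (nnz S)%:R <= s].

(* Evaluation of a polynomial in the n^2 variables x_{i,j}; the variable
   x_{i,j} is the one of index mxvec_index i j in 'I_(n*n). *)
Definition mx_eval (F : fieldType) (n : nat) (Q : {mpoly F[n * n]})
    (M : 'M[F]_n) : F :=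
  Q.@[fun k => mxvec M 0 k].

(* Main.v *)
Require Import Defs.
From HB Require Import structures.
From mathcomp Require Import all_boot all_order all_algebra.
From mathcomp Require Import mpoly.
From mathcomp Require Import zify.
Set Implicit Arguments. Unset Strict Implicit. Unset Printing Implicit Defensive.
Import Order.TTheory GRing.Theory Num.Theory.
Local Open Scope ring_scope.

Section Main.
Variables (F : fieldType) (n r s : nat).

Definition VT := (('I_n * 'I_r) + ('I_r * 'I_n) + 'I_s)%type.
Definition var (v : VT) : 'I_#|{: VT}| := enum_rank v.

Definition Phi (T : {ffun 'I_s -> 'I_n * 'I_n}) : 'M[{mpoly F[#|{: VT}|]}]_n :=
  \matrix_(i, j) (\sum_(l < r) 'X_(var (inl (inl (i,l)))) * 'X_(var (inl (inr (l,j))))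
     + \sum_(t < s) (if T t == (i,j) then 'X_(var (inr t)) else 0)).

Lemma msizeM_le2 (k : nat) (p q : {mpoly F[k]}) : (msize (p * q) <= (msize p + msize q).-1)%N.
Proof.
have [->|nz_p ] := eqVneq p 0; first by rewrite mul0r msize0.
have [->|nz_q ] := eqVneq q 0; first by rewrite mulr0 msize0.
by rewrite msizeM.
Qed.

Lemma msizeX_pow (k : nat) (q : {mpoly F[k]}) e : (msize q <= 3)%N -> (msize (q ^+ e) <= (2 * e).+1)%N.
Proof.
move=> hq; elim: e => [|e IH]; first by rewrite expr0 msize1.
rewrite exprS; apply: (leq_trans (msizeM_le2 _ _)); lia.
Qed.

Lemma msize_Phi T i j : (msize (Phi T i j) <= 3)%N.
Proof.
rewrite mxE; apply: (leq_trans (msizeD_le _ _)) ; rewrite geq_max; apply/andP; split.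
  apply: leq_trans; first exact: msize_sum. apply/bigmax_leqP => l _.
  apply: (leq_trans (msizeM_le2 _ _)); rewrite !msizeX !mdeg1 //.
apply: leq_trans; first exact: msize_sum. apply/bigmax_leqP => t _.
by case: ifP => _; rewrite ?msize0 // msizeX mdeg1.
Qed.


Local Notation RT := {ffun 'I_(n*n) -> 'I_n.+1}.
Definition mon (f : RT) : 'X_{1..n*n} := [multinom (f i : nat) | i < n*n].
Definition bb := (2 * (n*n*n)).+1.
Local Notation GT := {ffun 'I_#|{:VT}| -> 'I_bb}.
Local Notation CT := ({ffun 'I_s -> 'I_n * 'I_n} * GT)%type.
Definition monc (g : GT) : 'X_{1..#|{:VT}|} := [multinom (g i : nat) | i < #|{:VT}|].
Definition P (f : RT) T := \prod_(k < n*n) (mxvec (Phi T) 0 k) ^+ (f k).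
Definition Amx : 'M[F]_(#|{:RT}|, #|{:CT}|) :=
  \matrix_(i, j) (P (enum_val i) (enum_val j).1)@_(monc (enum_val j).2).

Lemma msize_prod_gen (k : nat) (I : Type) (rr : seq I) (q : I -> {mpoly F[k]}) (e : I -> nat) :
  (forall i, msize (q i) <= 3)%N ->
  (msize (\prod_(i <- rr) q i ^+ e i) <= (\sum_(i <- rr) 2 * e i).+1)%N.
Proof.
move=> hq; elim: rr => [|a rr IH]; first by rewrite !big_nil msize1.
rewrite !big_cons; apply: (leq_trans (msizeM_le2 _ _)).
have := msizeX_pow (e a) (hq a); lia.
Qed.

Lemma msize_P f T : (msize (P f T) <= bb)%N.
Proof.
apply: (leq_trans (msize_prod_gen _ _ _)).
  move=> k; case: (mxvec_indexP k) => i j; rewrite mxvecE; exact: msize_Phi.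
rewrite /bb ltnS.
have -> : (2 * (n * n * n) = \sum_(k < n*n) 2 * n)%N by rewrite sum_nat_const card_ord; lia.
apply: leq_sum => k _; have := ltn_ord (f k); lia.
Qed.

Lemma mon_inj : injective mon.
Proof.
move=> f g /(congr1 (fun m : 'X_{1..n*n} => m)) h; apply/ffunP => k.
apply: val_inj; have := congr1 (fun m : 'X_{1..n*n} => m k) h; rewrite /mon !mnmE //.
Qed.

Lemma mdeg_mon f : (mdeg (mon f) <= n*n*n)%N.
Proof.
rewrite mdegE.
have -> : (n * n * n = \sum_(k < n*n) n)%N by rewrite sum_nat_const card_ord.
apply: leq_sum => k _; rewrite /mon mnmE; have := ltn_ord (f k); lia.
Qed.


Lemma key : (#|{:CT}| < #|{:RT}|)%N -> exists Q : {mpoly F[n*n]},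
  [/\ Q != 0, (msize Q <= (n*n*n).+1)%N &
      forall T (x : 'I_#|{:VT}| -> F), Q.@[fun k => (mxvec (Phi T) 0 k).@[x]] = 0].
Proof.
move=> hcard.
have kerNZ : kermx Amx != 0.
  rewrite -mxrank_eq0 mxrank_ker; have := rank_leq_col Amx; lia.
have [i0 hi0] : exists i0, row i0 (kermx Amx) != 0.
  apply/existsP; apply: contraR kerNZ; rewrite negb_exists => /forallP h.
  apply/eqP/row_matrixP => i; rewrite row0; by move: (h i); rewrite negbK => /eqP.
set u := row i0 (kermx Amx) in hi0.
have hu : u *m Amx = 0 by rewrite /u -row_mul mulmx_ker row0.
have [j0 hj0] : exists j0, u 0 j0 != 0.
  apply/existsP; apply: contraR hi0; rewrite negb_exists => /forallP h.
  apply/eqP/rowP => j; rewrite [RHS]mxE; by move: (h j); rewrite negbK => /eqP.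
pose Q : {mpoly F[n*n]} := \sum_(i < #|{:RT}|) u 0 i *: 'X_[mon (enum_val i)].
exists Q; split.
- apply/negP => /eqP /(congr1 (mcoeff (mon (enum_val j0)))).
  rewrite mcoeff0 /Q raddf_sum (bigD1 j0) //= big1 ?addr0.
    by rewrite mcoeffZ mcoeffX eqxx mulr1; apply/eqP.
  move=> i hij; rewrite mcoeffZ mcoeffX.
  case: eqP => [/mon_inj/enum_val_inj h|_]; last by rewrite mulr0.
  by rewrite h eqxx in hij.
- rewrite /Q; apply: leq_trans; first exact: msize_sum.
  apply/bigmax_leqP => i _; apply: leq_trans (msizeZ_le _ _) _.
  by rewrite msizeX ltnS mdeg_mon.
move=> T x.
have -> : Q.@[fun k => (mxvec (Phi T) 0 k).@[x]] =
          (\sum_(i < #|{:RT}|) u 0 i *: P (enum_val i) T).@[x].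
  rewrite /Q !raddf_sum; apply: eq_bigr => i _.
  rewrite /= mevalZ mevalX mevalZ /P rmorph_prod; congr (_ * _).
  by apply: eq_bigr => k _; rewrite rmorphXn /mon mnmE.
suff -> : (\sum_(i < #|{:RT}|) u 0 i *: P (enum_val i) T) = 0 by rewrite meval0.
apply/mpolyP => m; rewrite mcoeff0 raddf_sum /=.
case: (boolP [forall k, m k < bb]%N) => [/forallP hm | ].
  pose g : GT := [ffun k => inord (m k)].
  have hg : monc g = m.
    apply/mnmP => k; rewrite /monc mnmE ffunE inordK //.
  have := congr1 (fun M : 'M[F]_(1, #|{:CT}|) => M 0 (enum_rank ((T, g) : CT))) hu.
  rewrite !mxE => h; rewrite -[RHS]h; apply: eq_bigr => i _.
  rewrite mcoeffZ; congr (_ * _); by rewrite /Amx mxE enum_rankK /= hg.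
rewrite negb_forall => /existsP [k hk].
apply: big1 => i _; rewrite mcoeffZ.
suff -> : (P (enum_val i) T)@_m = 0 by rewrite mulr0.
apply/eqP; rewrite mcoeff_eq0; apply: msize_mdeg_ge.
apply: (leq_trans (msize_P _ _)); apply: leq_trans (_ : m k <= _)%N.
  by rewrite leqNgt.
rewrite mdegE (bigD1 k) //=; exact: leq_addr.
Qed.


Lemma sparse_sum (S0 : 'M[F]_n) (i0 : 'I_n) (i j : 'I_n) :
  (nnz S0 <= s)%N ->
  let e := enum [set ij : 'I_n * 'I_n | S0 ij.1 ij.2 != 0] in
  let T : {ffun 'I_s -> 'I_n * 'I_n} := [ffun t : 'I_s => nth (i0, i0) e t] in
  let z := fun t : 'I_s => if (t < size e)%N then S0 (T t).1 (T t).2 else 0 in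
  \sum_(t < s) (if T t == (i, j) then z t else 0) = S0 i j.
Proof.
move=> hs e T z.
have hse : (size e <= s)%N by rewrite /e -cardE.
pose G := fun x : 'I_n * 'I_n => if x == (i, j) then S0 x.1 x.2 else 0.
have -> : \sum_(t < s) (if T t == (i, j) then z t else 0) =
          \sum_(t < s | (t < size e)%N) G (nth (i0, i0) e t).
  rewrite [RHS]big_mkcond /=; apply: eq_bigr => t _; rewrite /z /G /T ffunE.
  by case: ifP => //; case: ifP.
rewrite -(big_ord_widen _ (fun t => G (nth (i0, i0) e t)) hse).
rewrite -(big_mkord xpredT (fun t => G (nth (i0, i0) e t))).
have -> : \sum_(0 <= t < size e) G (nth (i0, i0) e t) = \sum_(x <- e) G x by rewrite (big_nth (i0, i0)).
rewrite /e big_enum /G /=.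
case: (boolP ((i, j) \in [set ij : 'I_n * 'I_n | S0 ij.1 ij.2 != 0])) => hin.
  rewrite (bigD1 (i, j)) //= eqxx big1 ?addr0 // => x /andP [_ hx].
  by rewrite (negbTE hx).
rewrite big1; last first.
  by move=> x hx; case: eqP => // hxe; rewrite -hxe hx in hin.
by move: hin; rewrite inE /= negbK => /eqP.
Qed.

Lemma decomp (M A0 S0 : 'M[F]_n) (i0 : 'I_n) : M = A0 + S0 -> (\rank A0 <= r)%N ->
  (nnz S0 <= s)%N -> exists T (x : 'I_#|{:VT}| -> F),
  forall k, mxvec M 0 k = (mxvec (Phi T) 0 k).@[x].
Proof.
move=> -> hr hs.
pose U : 'M[F]_(n, r) := col_ebase A0 *m pid_mx r.
pose V : 'M[F]_(r, n) := pid_mx (\rank A0) *m row_ebase A0.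
have hUV : U *m V = A0.
  rewrite /U /V mulmxA -[col_ebase A0 *m _ *m _]mulmxA mul_pid_mx.
  have -> : minn r (minn r (\rank A0)) = \rank A0 by lia.
  exact: mulmx_ebase.
pose e := enum [set ij : 'I_n * 'I_n | S0 ij.1 ij.2 != 0].
pose T : {ffun 'I_s -> 'I_n * 'I_n} := [ffun t : 'I_s => nth (i0, i0) e t].
pose z := fun t : 'I_s => if (t < size e)%N then S0 (T t).1 (T t).2 else 0.
pose h := fun v : VT => match v with
  | inl (inl (i, l)) => U i l | inl (inr (l, j)) => V l j | inr t => z t end.
exists T, (fun k => h (enum_val k)) => k.
case: (mxvec_indexP k) => i j; rewrite !mxvecE mxE.
rewrite /Phi mxE mevalD !raddf_sum /=.
rewrite -hUV mxE; congr (_ + _).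
  apply: eq_bigr => l _; rewrite mevalM !mevalXU /var !enum_rankK //.
rewrite -(sparse_sum i0 i j hs); apply: eq_bigr => t _.
by case: ifP => _; rewrite ?meval0 // mevalXU /var enum_rankK.
Qed.

End Main.

Lemma leq_pow_base (a b e : nat) : (a <= b)%N -> (a ^ e <= b ^ e)%N.
Proof. by case: e => [|e] h; rewrite ?expn0 // leq_exp2r. Qed.

Lemma count_ineq (n : nat) : (3 <= n)%N ->
  ((n*n) ^ ((n ^ 2) %/ 25) * (2*(n*n*n)).+1 ^ (n * (n %/ 25) + (n %/ 25) * n + (n ^ 2) %/ 25)
     < n.+1 ^ (n*n))%N.
Proof.
move=> hn.
set r := (n %/ 25)%N; set s := ((n ^ 2) %/ 25)%N.
have hr : (r * 25 <= n)%N by rewrite -leq_divRL.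
have hs : (s * 25 <= n * n)%N by rewrite -leq_divRL // mulnn.
have hb : ((2*(n*n*n)).+1 <= n ^ 4)%N.
  have h1 : (3 * (n*n*n) <= n * (n*n*n))%N by rewrite leq_mul2r hn orbT.
  have h2 : (0 < n*n*n)%N by rewrite !muln_gt0; lia.
  rewrite !expnS expn0; lia.
have hnr : (n * r * 25 <= n * n)%N by rewrite -mulnA leq_mul2l hr orbT.
apply: (@leq_ltn_trans (n ^ (2 * s + 4 * (n * r + r * n + s)))).
  rewrite [(n ^ (_ + _))%N]expnD; apply: leq_mul; first by rewrite expnM mulnn.
  by rewrite expnM leq_pow_base.
apply: (@leq_trans (n ^ (n * n))).
  rewrite ltn_exp2l; last lia.
  rewrite [(r * n)%N]mulnC; lia.
exact: leq_pow_base.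
Qed.

Lemma card_VT n r s : #|{: VT n r s}| = (n * r + r * n + s)%N.
Proof. by rewrite /VT !card_sum !card_prod !card_ord. Qed.

From mathcomp Require Import lra.

Theorem theorem1p1 (R : realFieldType) (eps : R) :
  0 < eps -> eps < 1 / 25%:R ->
  exists N : nat, forall n : nat, (N <= n)%N ->
  forall F : fieldType,
    (exists s : seq F, uniq s /\ (n ^ 2 <= size s)%N) ->
    exists Q : {mpoly F[n * n]},
      [/\ Q != 0, (msize Q <= (n ^ 3).+1)%N &
          forall M : 'M[F]_n,
            ~ rigid (eps * n%:R) (eps * (n ^ 2)%:R) M -> mx_eval Q M = 0].
Proof.
move=> eps0 eps25; exists 3%N => n hn F _.
have hcard := count_ineq hn.
have [Q [hQ0 hQs hQv]] := @key F n (n %/ 25)%N ((n ^ 2) %/ 25)%N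
  ltac:(by rewrite !card_prod !card_ffun !card_prod !card_ord card_VT /bb).
exists Q; split => //.
  by have -> : (n ^ 3 = n * n * n)%N by rewrite !expnS expn0 muln1 mulnA.
move=> M hM.
case: (eqVneq (mx_eval Q M) 0) => // hne; exfalso; apply: hM => -[A0 [S0 [hMe hr hs]]].
have hn0 : (0 < n)%N by lia.
have hnR : 0 < (n%:R : R) by rewrite ltr0n.
have hn2R : 0 < ((n ^ 2)%:R : R) by rewrite ltr0n expn_gt0 hn0.
have hrk : (\rank A0 <= n %/ 25)%N.
  rewrite leq_divRL //; apply: ltnW; rewrite -(ltr_nat R) natrM.
  nra.
have hsk : (nnz S0 <= (n ^ 2) %/ 25)%N.
  rewrite leq_divRL //; apply: ltnW; rewrite -(ltr_nat R) natrM.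
  nra.
have [T [x hx]] := decomp (Ordinal hn0) hMe hrk hsk.
move/eqP: hne; apply; rewrite /mx_eval -(hQv T x).
by apply: meval_eq => k; rewrite hx.
Qed.
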